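(* Let $K$ be either a number field or a one-dimensional function field of characteristic $0$, with algebraic closure $\bar K$. Assume either that $X$ is a smooth projective variety over $K$ and $f:X\dashrightarrow X$ is a dominant rational map defined over $K$, or that $X$ is a normal projective variety over $K$ and $f:X\to X$ is a dominant morphism defined over $K$. Let $h_X$ be a Weil height relative to an ample divisor. Let $P\in X_f(\bar K)$ be a point whose forward orbit $\mathcal O_f(P)=\{f^n(P):n\ge0\}$ is infinite, and assume that the arithmetic degree $\alpha_f(P)$ exists. Then \[ \lim_{B\to\infty}\frac{\#\{Q\in\mathcal O_f(P): h_X(Q)\le B\}}{\log B}=\frac{1}{\log\alpha_f(P)}, \] where, if $\alpha_f(P)=1$, this is to be read as saying that the limit equals $\infty$.
   Context: $I_f$ is the indeterminacy locus of $f$ and $X_f(\bar K)$ is the set of $P\in X(\bar K)$ with $f^n(P)\notin I_f$ for all $n\ge0$. Put $h_X^+=\max\{h_X,1\}$. The arithmetic degree of $f$ at $P$ is $\alpha_f(P)=\lim_{n\to\infty}h_X^+\bigl(f^n(P)\bigr)^{1/n}$, when this limit exists. *)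

(* Defs.v *)
From HB Require Import structures.
From mathcomp Require Import all_boot all_order all_algebra.
From mathcomp Require Import finmap all_classical all_reals all_analysis.
Set Implicit Arguments. Unset Strict Implicit. Unset Printing Implicit Defensive.
Import Order.TTheory GRing.Theory Num.Theory.
Import numFieldNormedType.Exports.
Local Open Scope classical_set_scope.
Local Open Scope ring_scope.

Definition forward_orbit (X : Type) (f : X -> X) (P : X) : set X :=
  [set Q | exists n : nat, Q = iter n f P].

Definition hplus (R : realType) (X : Type) (h : X -> R) (Q : X) : R :=
  Num.max (h Q) 1.

Definition arith_degree_is (R : realType) (X : Type) (f : X -> X) (h : X -> R)
    (P : X) (a : R) : Prop :=
  (fun n : nat => powR (hplus h (iter n f P)) (n%:R)^-1 : R) @ \oo --> (a : R).

Definition orbit_count (R : realType) (X : choiceType) (f : X -> X) (h : X -> R)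
    (P : X) (B : R) : \bar R :=
  let S := forward_orbit f P `&` [set Q | h Q <= B] in
  if pselect (finite_set S) then ((#|` fset_set S|)%:R)%:E else +oo%E.

(* Main.v *)
Require Import Defs.
From HB Require Import structures.
From mathcomp Require Import all_boot all_order all_algebra finmap.
From mathcomp Require Import all_classical all_reals all_analysis.
From mathcomp Require Import ring lra zify.
Import Order.TTheory GRing.Theory Num.Theory.
Import numFieldNormedType.Exports.
Local Open Scope classical_set_scope.
Local Open Scope ring_scope.

Section Comb.
Variables (R : realType) (X : choiceType) (f : X -> X) (h : X -> R) (P : X).

Lemma orbit_inj : infinite_set (forward_orbit f P) -> injective (fun n => iter n f P).
Proof.
move=> inf.
suff H : forall i j, (i < j)%N -> iter i f P = iter j f P -> False.
  move=> i j eij; apply/eqP; apply/negPn/negP => nij.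
  case: (ltngtP i j) nij => // ij _; first exact: (H _ _ ij eij).
  exact: (H _ _ ij (esym eij)).
move=> i j ij eij; apply: inf.
apply: (@sub_finite_set _ _ ((fun n => iter n f P) @` `I_j)); last first.
  exact/finite_image/finite_II.
move=> Q [n ->]; elim: n => [|n [k kj ek]].
  by exists 0%N => //=; rewrite /= (leq_ltn_trans _ ij).
have : (k.+1 < j)%N \/ k.+1 = j by case: (ltngtP k.+1 j) => //; [left|rewrite ltnS leqNgt kj|right].
case=> [kj'|kj'].
  by exists k.+1 => //=; rewrite ek.
by exists i => //=; rewrite eij -kj' -ek.
Qed.

Lemma count_upper (B : R) (M : nat) :
  injective (fun n => iter n f P) ->
  (forall n, (M <= n)%N -> B < h (iter n f P)) ->
  exists c : nat, orbit_count f h P B = (c%:R)%:E /\ (c <= M)%N.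
Proof.
move=> inj HM.
set S := forward_orbit f P `&` [set Q | h Q <= B].
have sub : S `<=` (fun n => iter n f P) @` `I_M.
  move=> Q [[n ->] hn]; exists n => //=; rewrite /= ltnNge; apply/negP => /HM.
  by rewrite ltNge hn.
have fin : finite_set S by apply: (sub_finite_set sub); exact/finite_image/finite_II.
have -> : orbit_count f h P B = ((#|` fset_set S|)%:R)%:E.
  by rewrite /orbit_count /=; case: pselect.
exists #|` fset_set S|; split => //.
have ss : (fset_set S `<=` fset_set ((fun n => iter n f P) @` `I_M))%fset.
  by rewrite -fset_set_sub //; exact/finite_image/finite_II.
apply: (leq_trans (fsubset_leq_card ss)).
rewrite fset_set_image; last exact: finite_II.
rewrite card_imfset //.
by rewrite fset_set_II card_imfset //= ?size_enum_ord //; exact: val_inj.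
Qed.

Lemma count_lower (B : R) (N k : nat) :
  injective (fun n => iter n f P) ->
  (forall n, (N <= n < N + k)%N -> h (iter n f P) <= B) ->
  ((k%:R)%:E <= orbit_count f h P B)%E.
Proof.
move=> inj HM.
set S := forward_orbit f P `&` [set Q | h Q <= B].
rewrite /orbit_count /=; destruct (pselect _) as [fin|nfin]; last by rewrite leey.
rewrite lee_fin ler_nat.
have sub : (fun i => iter (N + i) f P) @` `I_k `<=` S.
  move=> Q [i ik <-]; split; first by exists (N + i)%N.
  by apply: HM; rewrite leq_addr ltn_add2l.
have ginj : injective (fun i => iter (N + i) f P).
  by move=> x y /inj /eqP; rewrite eqn_add2l => /eqP.
have <- : #|` fset_set ((fun i => iter (N + i) f P) @` `I_k)| = k.
  rewrite fset_set_image; last exact: finite_II.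
  by rewrite card_imfset // fset_set_II card_imfset //= ?size_enum_ord //; exact: val_inj.
apply: fsubset_leq_card.
by rewrite -fset_set_sub //; exact/finite_image/finite_II.
Qed.
End Comb.
Section An.
Variables (R : realType) (X : choiceType) (f : X -> X) (h : X -> R) (P : X).

Let Hn n := hplus h (iter n f P).
Let ell n := ln (powR (Hn n) (n%:R^-1)).

Lemma Hn_ge1 n : 1 <= Hn n.
Proof. by rewrite /Hn /hplus le_max lexx orbT. Qed.

Lemma ln_Hn n : (0 < n)%N -> ln (Hn n) = n%:R * ell n.
Proof.
move=> n0; rewrite /ell ln_powR mulrA mulfV ?mul1r //.
by rewrite pnatr_eq0 -lt0n.
Qed.

Lemma small_h (B c : R) n : (0 < n)%N -> 1 <= B -> ell n <= c ->
  n%:R * c <= ln B -> h (iter n f P) <= B.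
Proof.
move=> n0 B1 lc ncB.
have H1 := Hn_ge1 n.
have : Hn n <= B.
  rewrite -ler_ln ?posrE ?(lt_le_trans ltr01) //.
  rewrite ln_Hn // (le_trans _ ncB) // ler_wpM2l //.
by apply: le_trans; rewrite /Hn /hplus le_max lexx.
Qed.

Lemma big_h (B c : R) n : (0 < n)%N -> 1 <= B -> c <= ell n ->
  ln B < n%:R * c -> B < h (iter n f P).
Proof.
move=> n0 B1 lc ncB.
have H1 := Hn_ge1 n.
have : B < Hn n.
  rewrite -ltr_ln ?posrE ?(lt_le_trans ltr01) //.
  rewrite ln_Hn // (lt_le_trans ncB) // ler_wpM2l //.
rewrite /Hn /hplus lt_max => /orP[] // B1'.
by move: (le_lt_trans B1 B1'); rewrite ltxx.
Qed.

Lemma ell_cvg a : arith_degree_is f h P a -> 1 <= a /\ ell @ \oo --> ln a.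
Proof.
move=> ha.
have pge1 n : 1 <= powR (Hn n) (n%:R^-1).
  rewrite /powR ifF; last by apply/negbTE; rewrite gt_eqF // (lt_le_trans ltr01) ?Hn_ge1.
  by rewrite -expR0 ler_expR mulr_ge0 // ?invr_ge0 // ln_ge0 // Hn_ge1.
have a1 : 1 <= a.
  rewrite leNgt; apply/negP => a1.
  have := (cvgrPdist_lt _ _).1 ha (1 - a) ltac:(by rewrite subr_gt0).
  case=> N _ /(_ N (leqnn N)) /=.
  rewrite ltNge => /negP; apply.
  rewrite ler_normr; apply/orP; right.
  by have := pge1 N; rewrite /Hn /hplus; lra.
split => //.
apply: (continuous_cvg _ _ ha); apply: continuous_ln.
by rewrite (lt_le_trans ltr01).
Qed.
End An.

Lemma natrB_ge (R : realType) (m n : nat) : m%:R - n%:R <= (m - n)%:R :> R.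
Proof.
case: (leqP n m) => [nm|mn]; first by rewrite natrB.
rewrite (_ : (m - n)%N = 0%N); last by apply/eqP; rewrite subn_eq0 ltnW.
by rewrite subr_le0 ler_nat ltnW.
Qed.

Lemma inv_bounds (R : realType) (L e : R) : 0 < L -> 0 < e ->
  let d := Num.min (L / 2) (e * L * L / 4) in
  [/\ 0 < d, d <= L / 2, (L - d)^-1 <= L^-1 + e / 2 & L^-1 - e / 2 <= (L + d)^-1].
Proof.
move=> L0 e0 d.
have d0 : 0 < d by rewrite lt_min !divr_gt0 ?mulr_gt0.
have dL : d <= L / 2 by rewrite ge_min lexx.
have de : d <= e * L * L / 4 by rewrite ge_min lexx orbT.
split => //.
- have m0 : 0 < L - d by lra.
  have -> : (L - d)^-1 = L^-1 + d / (L * (L - d)) by field; lra.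
  rewrite lerD2l ler_pdivrMr ?mulr_gt0 //.
  have : 0 <= (L - d - L / 2) * (e * L) by rewrite mulr_ge0 ?mulr_ge0 //; lra.
  lra.
- have m0 : 0 < L + d by lra.
  have -> : (L + d)^-1 = L^-1 - d / (L * (L + d)) by field; lra.
  rewrite lerD2l lerN2 ler_pdivrMr ?mulr_gt0 //.
  have : 0 <= d * (e * L) by rewrite mulr_ge0 ?mulr_ge0 //; lra.
  lra.
Qed.

Lemma lnB_of (R : realType) (T B : R) : 0 <= T -> expR T < B -> T < ln B /\ 1 <= B.
Proof.
move=> T0 hB.
have B0 : 0 < B by rewrite (lt_trans _ hB) // expR_gt0.
have lT : T < ln B by rewrite -[X in X < _]expRK ltr_ln ?posrE ?expR_gt0.
split => //; rewrite leNgt; apply/negP => /ltW /ln_le0; lra.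
Qed.

Theorem proposition3 (R : realType) (X : choiceType) (f : X -> X) (h : X -> R)
    (P : X) (a : R) :
  infinite_set (forward_orbit f P) ->
  arith_degree_is f h P a ->
  (fun B : R => (orbit_count f h P B * ((ln B)^-1)%:E)%E) @ +oo -->
    (if a == 1 then +oo%E else ((ln a)^-1)%:E).
Proof.
move=> inf ha.
have inj := @orbit_inj _ f P inf.
have [a1 hl] := @ell_cvg _ _ f h P a ha.
case: (eqVneq a 1) => [a_1|an1].
  rewrite a_1 ln1 in hl.
  apply/cvgeyPge => A.
  set A' := Num.max A 1.
  have A'0 : 0 < A' by rewrite lt_max ltr01 orbT.
  have AA' : A <= A' by rewrite le_max lexx.
  set d := (4 * A')^-1.
  have d0 : 0 < d by rewrite invr_gt0 mulr_gt0.
  have [N0 _ HN0] := (cvgrPdist_lt _ _).1 hl d d0.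
  set N1 := N0.+1.
  set T := (N1.+1)%:R / A'.
  have T0 : 0 <= T by rewrite divr_ge0 // ltW.
  apply: filterS (nbhs_pinfty_gt (num_real (expR T))) => B hB.
  have [lT B1] := @lnB_of R T B T0 hB.
  set y := ln B.
  have y0 : 0 < y by apply: le_lt_trans T0 lT.
  set x := 4 * A' * y.
  have x0 : 0 <= x by rewrite !mulr_ge0 // ltW.
  set k := (Num.truncn x - N1)%N.
  have cl : ((k%:R)%:E <= orbit_count f h P B)%E.
    apply: (@count_lower _ _ f h P B N1 k inj) => n /andP [Nn nk].
    have n0 : (0 < n)%N by rewrite /N1 in Nn; lia.
    have nt : (n < Num.truncn x)%N by rewrite /k in nk; lia.
    apply: (@small_h _ _ f h P B d n n0 B1).
      have := HN0 n (ltnW Nn); rewrite /= sub0r normrN => H.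
      exact: ltW (le_lt_trans (ler_norm _) H).
    have nx : n%:R <= x.
      apply: le_trans (_ : (Num.truncn x)%:R <= x); last by case/andP: (truncn_itv x0).
      by rewrite ler_nat ltnW.
    have -> : ln B = x * d by rewrite /x /d /y; field; lra.
    by rewrite ler_wpM2r // ltW.
  apply: le_trans (_ : ((k%:R * y^-1)%:E <= _)%E); last first.
    by rewrite EFinM; apply: lee_wpmul2r => //; rewrite lee_fin invr_ge0 ltW.
  rewrite lee_fin ler_pdivlMr //.
  have kk := natrB_ge R (Num.truncn x) N1.
  have tx := truncnS_gt x; rewrite -natr1 in tx.
  have yA : (N1.+1)%:R < y * A' by rewrite -ltr_pdivrMr.
  rewrite -natr1 in yA.
  have Ay : A * y <= A' * y by rewrite ler_wpM2r // ltW.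
  have Ay0 : 0 <= A' * y by rewrite mulr_ge0 // ltW.
  rewrite /k; move: kk tx; rewrite /x => kk tx.
  lra.
have a_gt1 : 1 < a by rewrite lt_neqAle eq_sym an1 a1.
set L := ln a.
have L0 : 0 < L by apply: ln_gt0.
have key : forall e : R, 0 < e -> \forall B \near +oo,
    exists c : R, (orbit_count f h P B * ((ln B)^-1)%:E)%E = c%:E /\ `|L^-1 - c| < e.
  move=> e e0.
  have [d0 dL dU dLo] := @inv_bounds R L e L0 e0.
  move: (Num.min _ _) d0 dL dU dLo => d d0 dL dU dLo.
  have [N0 _ HN0] := (cvgrPdist_lt _ _).1 hl d d0.
  pose N1 := N0.+1.
  pose T : R := 2 * (N1.+1)%:R / e.
  have T0 : 0 <= T by rewrite divr_ge0 // ?ltW.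
  apply: filterS (nbhs_pinfty_gt (num_real (expR T))) => B hB.
  have [lT B1] := @lnB_of R T B T0 hB.
  pose y := ln B.
  have y0 : 0 < y by apply: le_lt_trans T0 lT.
  have Ld0 : 0 < L - d by lra.
  have Lpd0 : 0 < L + d by lra.
  pose xu : R := y / (L - d).
  have xu0 : 0 <= xu by rewrite divr_ge0 // ltW.
  pose M := (N1 + Num.truncn xu).+1.
  have [c0 [cnt cM]] : exists c : nat, orbit_count f h P B = (c%:R)%:E /\ (c <= M)%N.
    apply: (@count_upper _ _ f h P B M inj) => n Mn.
    have n0 : (0 < n)%N by move: Mn; rewrite /M /N1; move: (Num.truncn xu) => t; clear; lia.
    have N0n : (N0 <= n)%N by move: Mn; rewrite /M /N1; move: (Num.truncn xu) => t; clear; lia.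
    apply: (@big_h _ _ f h P B (L - d) n n0 B1).
      have := HN0 n N0n; rewrite /= -/L => H.
      have := le_lt_trans (ler_norm _) H.
      move: (ln _) => l Hl; lra.
    have nx : xu < n%:R.
      apply: lt_le_trans (truncnS_gt xu) _.
      by rewrite ler_nat; move: Mn; rewrite /M /N1; move: (Num.truncn xu) => t; clear; lia.
    have -> : ln B = xu * (L - d) by rewrite /xu /y; field; rewrite gt_eqF.
    by rewrite ltr_pM2r.
  pose xl : R := y / (L + d).
  have xl0 : 0 <= xl by rewrite divr_ge0 // ltW.
  pose k := (Num.truncn xl - N1)%N.
  have cl : ((k%:R)%:E <= orbit_count f h P B)%E.
    apply: (@count_lower _ _ f h P B N1 k inj) => n /andP [Nn nk].
    have n0 : (0 < n)%N by move: Nn; rewrite /N1; clear; lia.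
    have nt : (n < Num.truncn xl)%N.
      by move: Nn nk; rewrite /k /N1; move: (Num.truncn xl) => t; clear; lia.
    apply: (@small_h _ _ f h P B (L + d) n n0 B1).
      have := HN0 n (ltnW Nn); rewrite /= -/L distrC => H.
      have := le_lt_trans (ler_norm _) H.
      move: (ln _) => l Hl; lra.
    have nx : n%:R <= xl.
      apply: le_trans (_ : (Num.truncn xl)%:R <= xl); last by case/andP: (truncn_itv xl0).
      by rewrite ler_nat ltnW.
    have -> : ln B = xl * (L + d) by rewrite /xl /y; field; rewrite gt_eqF.
    by rewrite ler_wpM2r // ltW.
  exists (c0%:R * y^-1); split; first by rewrite cnt.
  have hu : xu <= y * (L^-1 + e/2) by rewrite /xu ler_wpM2l // ltW.
  have hl' : y * (L^-1 - e/2) <= xl by rewrite /xl ler_wpM2l // ltW.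
  have /andP [tu _] := truncn_itv xu0.
  have tl := truncnS_gt xl; rewrite -natr1 in tl.
  have kk := natrB_ge R (Num.truncn xl) N1.
  have kc : k%:R <= c0%:R :> R by move: cl; rewrite cnt lee_fin.
  have cM' : c0%:R <= M%:R :> R by rewrite ler_nat.
  rewrite /M -natr1 natrD in cM'.
  have eT : 2 * (N1%:R + 1) < y * e.
    by move: lT; rewrite /T ltr_pdivrMr // natr1.
  have -> : L^-1 - c0%:R / y = (y * L^-1 - c0%:R) / y.
    by field; rewrite !gt_eqF.
  rewrite normrM [X in _ * X]gtr0_norm ?invr_gt0 // ltr_pdivrMr //.
  rewrite ltr_norml; apply/andP; split.
    rewrite /k in kk kc; lra.
  rewrite /k in kk kc; lra.
apply/fine_cvgP; split.
  by apply: filterS (key 1 ltr01) => B [c [hc _]] /=; rewrite hc.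
apply/cvgrPdist_lt => e e0.
by apply: filterS (key e e0) => B [c [hc hc']] /=; rewrite hc.
Qed.
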